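(* Let $\Omega$ be a finite set, $n\ge 1$, and let $P_i,Q_i$ ($i=1,\dots,n$) be strictly positive probability mass functions on $\Omega$. For each $i$ define the finite positive measure on $\mathbb R$ \[ \eta_i:=\sum_{\omega\in\Omega}\sqrt{P_i(\omega)Q_i(\omega)}\,\delta_{\frac12\log\frac{P_i(\omega)}{Q_i(\omega)}}, \] where $\delta_u$ is the Dirac mass at $u\in\mathbb R$. Then \[ \mathrm{TV}\Big(\bigotimes_{i=1}^n P_i,\bigotimes_{i=1}^n Q_i\Big)=T(\eta_1*\cdots*\eta_n), \] where for a finite positive measure $\eta$ on $\mathbb R$, $T(\eta):=\frac12\int_{\mathbb R}|e^x-e^{-x}|\,\eta(dx)$.
   Context: $*$ denotes convolution of finite positive measures on $\mathbb R$ (the pushforward of the product measure under addition). For probability measures $\mu,\nu$ on a finite set, $\mathrm{TV}(\mu,\nu)=\frac12\sum_\omega|\mu(\omega)-\nu(\omega)|$. *)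

(* Defs.v *)
From mathcomp Require Import all_boot all_order all_algebra.
From mathcomp Require Import reals sequences exp.
Set Implicit Arguments. Unset Strict Implicit. Unset Printing Implicit Defensive.
Import Order.TTheory GRing.Theory Num.Theory.
Local Open Scope ring_scope.

(* A finite positive measure on R with finite support (a finite nonnegative
   combination of Dirac masses) is represented by a list of (atom, weight)
   pairs:  [:: (a_1,w_1); ...; (a_k,w_k)]  stands for  \sum_j w_j \delta_{a_j}. *)
Definition fmeas (R : realType) := seq (R * R).

Definition fmeas_val (R : realType) (m : fmeas R) (A : pred R) : R :=
  \sum_(p <- m | p.1 \in A) p.2.

Definition fmeas_int (R : realType) (m : fmeas R) (f : R -> R) : R :=
  \sum_(p <- m) p.2 * f p.1.

(* convolution = pushforward under addition of the product measure:
   (\sum w_j \delta_{a_j}) * (\sum v_k \delta_{b_k}) = \sum w_j v_k \delta_{a_j+b_k} *)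
Definition fmeas_conv (R : realType) (m1 m2 : fmeas R) : fmeas R :=
  [seq (p.1 + q.1, p.2 * q.2) | p <- m1, q <- m2].

Definition fmeas_conv_big (R : realType) (n : nat) (eta : 'I_n -> fmeas R)
  : fmeas R := \big[@fmeas_conv R/[:: (0, 1)]]_(i < n) eta i.

Definition eta_of (R : realType) (Omega : finType) (P Q : Omega -> R) : fmeas R :=
  [seq (ln (P w / Q w) / 2, Num.sqrt (P w * Q w)) | w <- enum Omega].

Definition Tfun (R : realType) (m : fmeas R) : R :=
  fmeas_int m (fun x => `|expR x - expR (- x)|) / 2.

Definition prod_pmf (R : realType) (Omega : finType) (n : nat)
  (P : 'I_n -> Omega -> R) (w : {ffun 'I_n -> Omega}) : R :=
  \prod_(i < n) P i (w i).

Definition TV (R : realType) (X : finType) (mu nu : X -> R) : R :=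
  (\sum_(x : X) `|mu x - nu x|) / 2.

Definition pos_pmf (R : realType) (Omega : finType) (P : Omega -> R) : Prop :=
  (forall w, 0 < P w) /\ \sum_(w : Omega) P w = 1.

(* Main.v *)
Require Import Defs.
From mathcomp Require Import all_boot all_order all_algebra.
From mathcomp Require Import reals sequences exp.
From mathcomp Require Import ring lra.
Import Order.TTheory GRing.Theory Num.Theory.
Local Open Scope ring_scope.

Lemma conv_sum (R : realType) (m1 m2 : fmeas R) (f : R -> R -> R) :
  \sum_(p <- fmeas_conv m1 m2) f p.1 p.2 =
  \sum_(p <- m1) \sum_(q <- m2) f (p.1 + q.1) (p.2 * q.2).
Proof. by rewrite /fmeas_conv big_allpairs_dep. Qed.

Lemma split_ffun (R : realType) (Omega : finType) (n : nat)
  (g : Omega -> {ffun 'I_n -> Omega} -> R) :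
  \sum_(o : Omega) \sum_(w : {ffun 'I_n -> Omega}) g o w =
  \sum_(w : {ffun 'I_n.+1 -> Omega}) g (w ord0) [ffun j => w (lift ord0 j)].
Proof.
rewrite pair_big /=.
pose phi (w : {ffun 'I_n.+1 -> Omega}) := (w ord0, [ffun j => w (lift ord0 j)]).
pose psi (x : Omega * {ffun 'I_n -> Omega}) : {ffun 'I_n.+1 -> Omega} :=
  [ffun i => match unlift ord0 i with None => x.1 | Some j => x.2 j end].
rewrite (reindex phi) /=; first by [].
exists psi => [w _|[o h] _]; rewrite /phi /psi.
- apply/ffunP => i; rewrite !ffunE /=.
  case: unliftP => [j ->|->] /=; by rewrite ?ffunE.
- congr pair; first by rewrite ffunE unlift_none.
  by apply/ffunP => j; rewrite !ffunE liftK.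
Qed.

Lemma conv_big_sum (R : realType) (Omega : finType) (n : nat)
  (a wt : 'I_n -> Omega -> R) (f : R -> R -> R) :
  \sum_(p <- fmeas_conv_big (fun i => [seq (a i o, wt i o) | o <- enum Omega])) f p.1 p.2
  = \sum_(w : {ffun 'I_n -> Omega}) f (\sum_i a i (w i)) (\prod_i wt i (w i)).
Proof.
elim: n a wt f => [|n IH] a wt f.
  rewrite /fmeas_conv_big big_ord0 big_cons big_nil addr0.
  rewrite (eq_bigr (fun _ => f 0 1)); last by move=> w _; rewrite !big_ord0.
  by rewrite sumr_const card_ffun card_ord expn0.
rewrite /fmeas_conv_big big_ord_recl conv_sum big_map big_enum /=.
rewrite (eq_bigr (fun w : {ffun 'I_n.+1 -> Omega} =>
   (fun o (h : {ffun 'I_n -> Omega}) => f (a ord0 o + \sum_i a (lift ord0 i) (h i))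
        (wt ord0 o * \prod_i wt (lift ord0 i) (h i))) (w ord0) [ffun j => w (lift ord0 j)])); last first.
  move=> w _ /=; rewrite big_ord_recl [X in f _ X]big_ord_recl; congr f; [congr (_ + _) | congr (_ * _)];
    apply: eq_bigr => i _; rewrite ?ffunE //.
etransitivity; last exact: (@split_ffun R Omega n (fun o (h : {ffun 'I_n -> Omega}) => f (a ord0 o + \sum_i a (lift ord0 i) (h i)) (wt ord0 o * \prod_i wt (lift ord0 i) (h i)))).
apply: eq_bigr => o _.
have := IH (fun i => a (lift ord0 i)) (fun i => wt (lift ord0 i))
  (fun x y => f (a ord0 o + x) (wt ord0 o * y)).
by rewrite /fmeas_conv_big => ->.
Qed.
Lemma expR_half (R : realType) (x : R) : 0 < x -> expR (ln x / 2) = Num.sqrt x.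
Proof.
move=> x0.
rewrite -[LHS]ger0_norm ?expR_ge0 // -sqrtr_sqr expr2 -expRD.
by rewrite -splitr lnK.
Qed.
Lemma key (R : realType) (p q : R) : 0 < p -> 0 < q ->
  Num.sqrt (p * q) * expR (ln (p / q) / 2) = p /\
  Num.sqrt (p * q) * expR (- (ln (p / q) / 2)) = q.
Proof.
move=> p0 q0.
have pq0 : 0 < p / q by rewrite divr_gt0.
have h1 : Num.sqrt (p * q) * expR (ln (p / q) / 2) = p.
  rewrite expR_half // -sqrtrM ?mulr_ge0 ?ltW //.
  have -> : p * q * (p / q) = p ^+ 2 by field; rewrite gt_eqF.
  rewrite sqrtr_sqr ger0_norm //; exact: ltW.
split => //.
rewrite expRN.
have e0 : expR (ln (p / q) / 2) != 0 by rewrite gt_eqF ?expR_gt0.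
have s0 : Num.sqrt (p * q) ^+ 2 = p * q by rewrite sqr_sqrtr // mulr_ge0 // ltW.
move: h1 e0 s0; set s := Num.sqrt (p * q); set e := expR _ => h1 e0 s0.
apply: (@mulIf _ p); first by rewrite gt_eqF.
rewrite -[X in _ * X = _]h1 [RHS]mulrC -s0.
by field.
Qed.

Theorem theorem1 (R : realType) (Omega : finType) (n : nat) (hn : (0 < n)%N)
  (P Q : 'I_n -> Omega -> R)
  (hP : forall i, pos_pmf (P i)) (hQ : forall i, pos_pmf (Q i)) :
  TV (prod_pmf P) (prod_pmf Q)
  = Tfun (fmeas_conv_big (fun i => eta_of (P i) (Q i))).
Proof.
rewrite /Tfun /fmeas_int /eta_of /TV.
rewrite (conv_big_sum R Omega n (fun i o => ln (P i o / Q i o) / 2)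
  (fun i o => Num.sqrt (P i o * Q i o)) (fun x y => y * `|expR x - expR (- x)|)).
congr (_ / 2); apply: eq_bigr => w _.
rewrite /prod_pmf.
have eA : forall (r : seq 'I_n) (F : 'I_n -> R),
    expR (\sum_(i <- r) F i) = \prod_(i <- r) expR (F i).
  move=> r F; elim: r => [|x r IHr]; first by rewrite !big_nil expR0.
  by rewrite !big_cons expRD IHr.
rewrite -sumrN !eA -[X in _ = X * _]ger0_norm; last first.
  by apply: prodr_ge0 => i _; apply: sqrtr_ge0.
rewrite -normrM.
rewrite mulrBr; congr `|_ - _|; rewrite -big_split /=; apply: eq_bigr => i _;
  have [h1 h2] := key R _ _ (proj1 (hP i) (w i)) (proj1 (hQ i) (w i)).
  by rewrite h1.
by rewrite h2.
Qed.
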